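(* Let $d\ge 2$ and $n\ge 2$ be integers, let $k\ge0$ be such that $n_k\le n<n_{k+1}$, let $\lambda(n)=(l_{k+1},l_k,\ldots,l_0)$, and set $\lambda_i(n)=l_0+l_1d+\cdots+l_{i-1}d^{i-1}$ (so $\lambda_0(n)=0$). Then $$W(D_{n,d};q)=\sum_{i=0}^k d^i(n-n_i+1)q^{2i+1}+\sum_{i=0}^{k'}\left(d^{2i}\left\lfloor\frac{n-m_i}{d^{i+1}}\right\rfloor\binom{d+1}{2}+d^{2i}\binom{l_i+1}{2}+d^i(l_i+1)(\lambda_i(n)+1)\right)q^{2i+2},$$ where $k'=k-1$ if $n_k\le n<m_k$ and $k'=k$ if $m_k\le n<n_{k+1}$.
   Context: For a connected graph $G$, $W(G;q)=\sum_{\{u,v\}}q^{d(u,v)}$ over unordered pairs of distinct vertices, $d$ the graph distance. The $d$-ary dendrimer $D_{n,d}$ is the tree on vertex set $\{1,\ldots,n\}$ defined inductively: $D_{1,d}$ is the single vertex $1$, and $D_{n,d}$ is obtained from $D_{n-1,d}$ by attaching a new leaf $n$ to the smallest-numbered vertex of $D_{n-1,d}$ having degree $\le d$. Define $n_k=2+(d+1)\frac{d^k-1}{d-1}$ and $m_k=3+2d\frac{d^k-1}{d-1}$ for $k\ge0$. For a vertex $m$ with $n_k\le m<n_{k+1}$, its label is $\lambda(m)=(l_{k+1},l_k,\ldots,l_0)$ where $0\le l_i<d$ and $\sum_{i=0}^{k+1}l_id^i=m-n_k+(d-1)d^k$. *)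

(* Defs.v *)
From mathcomp Require Import all_boot all_algebra.
Set Implicit Arguments. Unset Strict Implicit. Unset Printing Implicit Defensive.
Import GRing.Theory.
Local Open Scope ring_scope.

(* Graphs on vertex set {1,...,n} given by an edge list of (unordered) pairs. *)
Definition deg (E : seq (nat * nat)) (v : nat) : nat :=
  count (fun e => (e.1 == v) || (e.2 == v)) E.

Definition nbrs (E : seq (nat * nat)) (u : nat) : seq nat :=
  [seq (if e.1 == u then e.2 else e.1) | e <- E & (e.1 == u) || (e.2 == u)].

Fixpoint dendrimer_edges (d m : nat) : seq (nat * nat) :=
  match m with
  | 0 => [::]
  | 1 => [::]
  | m'.+1 =>
      let E := dendrimer_edges d m' in
      let vs := iota 1 m' in
      let p := nth 0%N vs (find (fun v => (deg E v <= d)%N) vs) in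
      rcons E (p, m)
  end.

Fixpoint reach (E : seq (nat * nat)) (k u v : nat) : bool :=
  match k with
  | 0 => u == v
  | k'.+1 => (u == v) || has (fun w => reach E k' w v) (nbrs E u)
  end.

(* Graph distance in a connected graph on n vertices (always < n). *)
Definition dist (E : seq (nat * nat)) (n u v : nat) : nat :=
  find (fun k => reach E k u v) (iota 0 n).

Definition wiener_poly (E : seq (nat * nat)) (n : nat) : {poly int} :=
  \sum_(1 <= v < n.+1) \sum_(1 <= u < v) 'X^(dist E n u v).

Definition W_dendrimer (n d : nat) : {poly int} :=
  wiener_poly (dendrimer_edges d n) n.

Definition nk (d k : nat) : nat := (2 + (d + 1) * ((d ^ k - 1) %/ (d - 1)))%N.
Definition mk (d k : nat) : nat := (3 + 2 * d * ((d ^ k - 1) %/ (d - 1)))%N.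

(* For n_k <= m < n_{k+1}, the label digits l_i of m (base-d digits of
   m - n_k + (d-1) d^k). *)
Definition label_val (d k m : nat) : nat := (m - nk d k + (d - 1) * d ^ k)%N.
Definition label_digit (d k m i : nat) : nat := ((label_val d k m %/ d ^ i) %% d)%N.
Definition lambda_i (d k m i : nat) : nat :=
  (\sum_(j < i) label_digit d k m j * d ^ j)%N.

(* Main.v *)
Require Import Defs.
From mathcomp Require Import all_boot all_algebra.
From mathcomp Require Import zify ring.
Import GRing.Theory.
Set Implicit Arguments. Unset Strict Implicit. Unset Printing Implicit Defensive.

Section Tree.
Variable d : nat.
Hypothesis hd : (2 <= d)%N.

Definition par (m : nat) := ((m - 3) %/ d).+1.

Lemma par_lt m : (2 <= m)%N -> (par m < m)%N.
Proof.
move=> hm; rewrite /par; have := leq_div (m - 3) d; lia.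
Qed.

Lemma par_ge1 m : (1 <= par m)%N.
Proof. by []. Qed.

Fixpoint tdf (f u v : nat) : nat :=
  match f with
  | 0 => 0
  | f.+1 => if u == v then 0 else if (v < u)%N then (tdf f (par u) v).+1
            else (tdf f u (par v)).+1
  end.

Definition td u v := tdf (u + v) u v.

Lemma tdfS f u v : tdf f.+1 u v = if u == v then 0 else if (v < u)%N then (tdf f (par u) v).+1
            else (tdf f u (par v)).+1.
Proof. by []. Qed.

Lemma tdf_stable f u v : (1 <= u)%N -> (1 <= v)%N -> (u + v <= f)%N ->
  tdf f.+1 u v = tdf f u v.
Proof.
elim: f u v => [|f IH] u v hu hv huv; first lia.
rewrite tdfS [RHS]tdfS.
case: eqP => // /eqP huv'.
case: ifP => hvu.
  rewrite IH //; have := par_lt (m:=u); lia.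
rewrite IH //; have := par_lt (m:=v); lia.
Qed.

Lemma tdf_ge f u v : (1 <= u)%N -> (1 <= v)%N -> (u + v <= f)%N ->
  tdf f u v = td u v.
Proof.
move=> hu hv; elim: f => [|f IH] h; first lia.
case: (leqP (u + v) f) => h'.
  by rewrite tdf_stable // IH.
have -> : f.+1 = u + v by lia.
done.
Qed.

Lemma td_eq u v : (1 <= u)%N -> (1 <= v)%N ->
  td u v = if u == v then 0 else if (v < u)%N then (td (par u) v).+1
           else (td u (par v)).+1.
Proof.
move=> hu hv; rewrite /td.
have -> : (u + v = (u + v).-1.+1)%N by lia.
rewrite tdfS.
case: eqP => // /eqP huv'.
case: ifP => hvu.
  rewrite tdf_ge //; have := par_lt (m:=u); lia.
rewrite tdf_ge //; have := par_lt (m:=v); lia.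
Qed.

Lemma td_refl u : (1 <= u)%N -> td u u = 0.
Proof. by move=> hu; rewrite td_eq // eqxx. Qed.

Lemma td_gt u v : (1 <= v)%N -> (v < u)%N -> td u v = (td (par u) v).+1.
Proof.
move=> hv hvu; rewrite td_eq //; last lia.
have -> : (u == v) = false by apply/eqP; lia.
by rewrite hvu.
Qed.

Lemma td_lt u v : (1 <= u)%N -> (u < v)%N -> td u v = (td u (par v)).+1.
Proof.
move=> hu huv; rewrite td_eq //; last lia.
have -> : (u == v) = false by apply/eqP; lia.
have -> : (v < u)%N = false by lia.
done.
Qed.

Lemma td_par x v : (2 <= x)%N -> (1 <= v)%N ->
  td x v = (td (par x) v).+1 \/ td (par x) v = (td x v).+1.
Proof.
move=> hx; elim/ltn_ind: v => v IH hv.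
have hpx := par_lt hx.
case: (ltngtP x v) => hxv.
- rewrite td_lt //; last lia.
  rewrite (@td_lt (par x) v) //; last lia.
  have hpv : (2 <= v)%N by lia.
  have := par_lt hpv => hpv'.
  case: (IH (par v) hpv' (par_ge1 _)) => ->; [left|right]; done.
- by left; rewrite td_gt.
- subst v; right; rewrite td_refl; last lia.
  by rewrite (td_lt (par_ge1 x) hpx) td_refl.
Qed.


Lemma par_char c v : (2 <= c)%N -> (1 <= v)%N ->
  (par c == v) = ((if v == 1%N then 2 else v * d + 3 - d) <= c)%N && (c <= v * d + 2)%N.
Proof.
move=> hc hv; rewrite /par.
have hd0 : (0 < d)%N by lia.
have -> : (((c - 3) %/ d).+1 == v) = ((v.-1 <= (c - 3) %/ d) && ((c - 3) %/ d < v))%N.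
  apply/eqP/andP; lia.
rewrite leq_divRL // ltn_divLR //.
have -> : (v.-1 * d = v * d - d)%N by rewrite -subn1 mulnBl mul1n.
case: eqP => hv1.
  subst v; rewrite mul1n; apply/andP/andP; lia.
have : (2 * d <= v * d)%N by rewrite leq_mul2r; lia.
move: (v * d) => w hw.
apply/andP/andP; lia.
Qed.

Lemma count_iota_int a n lo hi :
  count (fun c => (lo <= c)%N && (c <= hi)%N) (iota a n) = (minn (a + n) hi.+1 - maxn a lo)%N.
Proof.
elim: n => [|n IH]; first by rewrite /= addn0; lia.
rewrite -addn1 iotaD count_cat IH /=; lia.
Qed.

Definition Edg (m : nat) := [seq (par c, c) | c <- iota 2 m.-1].

Lemma par_neq c : (2 <= c)%N -> (par c == c) = false.
Proof. move=> hc; have := par_lt hc; lia. Qed.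

Definition lo v := if v == 1%N then 2 else (v * d + 3 - d)%N.

Lemma deg_Edg m v : (1 <= m)%N -> (1 <= v)%N ->
  deg (Edg m) v = (((2 <= v) && (v <= m))%N + (minn (m + 1) (v * d + 2).+1 - maxn 2 (lo v)))%N.
Proof.
move=> hm hv; rewrite /deg /Edg count_map.
have := count_predUI (fun c => par c == v) (fun c => c == v) (iota 2 m.-1).
have -> : count (predI (fun c => par c == v) (fun c => c == v)) (iota 2 m.-1) = 0%N.
  rewrite (@eq_in_count _ _ pred0) ?count_pred0 // => c; rewrite mem_iota /= => /andP[hc _].
  apply/negbTE/andP => -[/eqP h1 /eqP h2]; subst v; have := par_lt hc; lia.
rewrite addn0 => H.
have -> : count (preim (fun c => (par c, c)) (fun e => (e.1 == v) || (e.2 == v))) (iota 2 m.-1)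
   = count (predU (fun c => par c == v) (fun c => c == v)) (iota 2 m.-1) by [].
rewrite H addnC; congr (_ + _)%N.
  transitivity (nat_of_bool (v \in iota 2 m.-1)); first exact: count_uniq_mem (iota_uniq 2 m.-1).
  rewrite mem_iota; congr nat_of_bool; apply/idP/idP; lia.
rewrite (@eq_in_count _ _ (fun c => (lo v <= c)%N && (c <= v * d + 2)%N)); last first.
  by move=> c; rewrite mem_iota => /andP[hc _] /=; rewrite par_char.
rewrite count_iota_int; congr (minn _ _ - _)%N; lia.
Qed.

Lemma find_iota_eq (P : pred nat) a n j : (j < n)%N -> P (a + j)%N ->
  (forall i, (i < j)%N -> ~~ P (a + i)%N) -> find P (iota a n) = j.
Proof.
move=> hjn hP hi.
have -> : n = (j + (n - j))%N by lia.
rewrite iotaD find_cat.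
have -> : has P (iota a j) = false.
  apply/negbTE/hasPn => x; rewrite mem_iota => /andP[h1 h2].
  have -> : x = (a + (x - a))%N by lia.
  apply: hi; lia.
rewrite size_iota.
have -> : (n - j = (n - j).-1.+1)%N by lia.
by rewrite /= hP addn0.
Qed.

Lemma de_S k : dendrimer_edges d k.+2 =
  rcons (dendrimer_edges d k.+1)
   (nth 0%N (iota 1 k.+1) (find (fun v => (deg (dendrimer_edges d k.+1) v <= d)%N) (iota 1 k.+1)), k.+2).
Proof. by []. Qed.

Lemma edges_eq m : (1 <= m)%N -> dendrimer_edges d m = Edg m.
Proof.
elim: m => [//|m IH] hm.
case: m IH hm => [|k] IH hm; first by [].
rewrite de_S IH //.
set P := par k.+2.
have hP1 : (1 <= P)%N by [].
have hPk : (P <= k.+1)%N by have := par_lt (m:=k.+2); lia.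
have -> : find (fun v => (deg (Edg k.+1) v <= d)%N) (iota 1 k.+1) = P.-1.
  have hcP := par_char (c:=k.+2) (v:=P) isT hP1.
  rewrite eqxx in hcP; symmetry in hcP.
  have hPdef : P = ((k.+2 - 3) %/ d).+1 by [].
  apply: find_iota_eq; first lia.
    have -> : (1 + P.-1 = P)%N by lia.
    rewrite deg_Edg //.
    move: hcP; rewrite /lo; case: eqP => hP.
      rewrite hP mul1n; lia.
    move: (P * d)%N => w; lia.
  move=> i hi; have hi1 : (1 <= 1 + i)%N by lia.
  rewrite deg_Edg //.
  have hv : ((1 + i) * d <= k - 1)%N.
    rewrite -leq_divRL; last lia.
    have -> : (k - 1 = k.+2 - 3)%N by lia.
    lia.
  rewrite /lo; case: eqP => h1.
    rewrite h1 mul1n in hv *; lia.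
  have : (2 * d <= (1 + i) * d)%N by rewrite leq_mul2r; lia.
  move: hv; move: ((1 + i) * d)%N => w; lia.
rewrite nth_iota; last lia.
rewrite /Edg -cats1.
have -> : (k.+2.-1 = k + 1)%N by lia.
rewrite iotaD map_cat /=.
have -> : (1 + P.-1 = P)%N by lia.
by have -> : (2 + k = k.+2)%N by lia.
Qed.

Lemma nbrs_par n u : (2 <= u)%N -> (u <= n)%N -> par u \in nbrs (Edg n) u.
Proof.
move=> h1 h2; apply/mapP; exists (par u, u).
  rewrite mem_filter /= eqxx orbT /=; apply/mapP; exists u => //.
  rewrite mem_iota; lia.
by rewrite /= par_neq.
Qed.

Lemma nbrs_child n c : (2 <= c)%N -> (c <= n)%N -> c \in nbrs (Edg n) (par c).
Proof.
move=> h1 h2; apply/mapP; exists (par c, c).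
  rewrite mem_filter /= eqxx /=; apply/mapP; exists c => //.
  rewrite mem_iota; lia.
by rewrite /= eqxx.
Qed.

Lemma nbrs_inv n u w : w \in nbrs (Edg n) u ->
  [/\ (1 <= w)%N, (w <= n)%N &
   ((2 <= w)%N /\ par w = u \/ (2 <= u)%N /\ par u = w)].
Proof.
case/mapP => e; rewrite mem_filter => /andP[he /mapP[c hc he']] ->.
subst e; move: hc he; rewrite mem_iota -subn1 /= => hc.
have hpc := par_lt (m:=c).
case: (par c =P u) => [hp _|hp /eqP hcu].
  split; [lia|lia|left; split => //; lia].
subst u; split; [done|lia|right; split => //; lia].
Qed.

Lemma reachS E k u v : reach E k.+1 u v = (u == v) || has (fun w => reach E k w v) (nbrs E u).
Proof. by []. Qed.

Lemma reach_refl E k u : reach E k u u.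
Proof. by case: k => [|k]; rewrite /= eqxx. Qed.

Lemma reach_snoc E k u w v : reach E k u w -> v \in nbrs E w -> reach E k.+1 u v.
Proof.
elim: k u => [|k IH] u.
  move=> hr; have /eqP -> : u == w := hr; move=> hv; rewrite reachS; apply/orP; right; apply/hasP; exists v => //.
  by rewrite /= eqxx.
rewrite reachS => /orP[/eqP ->|/hasP[x hx hr]] hv.
  rewrite reachS; apply/orP; right; apply/hasP; exists v => //; exact: reach_refl.
rewrite reachS; apply/orP; right; apply/hasP; exists x => //; exact: IH.
Qed.

Lemma reach_td n k u v : (1 <= u)%N -> (u <= n)%N -> (1 <= v)%N -> (v <= n)%N ->
  (td u v <= k)%N -> reach (Edg n) k u v.
Proof.
elim: k u v => [|k IH] u v hu hun hv hvn.
  rewrite td_eq //; case: eqP => [->|_]; first by rewrite /= eqxx.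
  by case: ifP.
rewrite td_eq //; case: eqP => [->|huv]; first by rewrite reach_refl.
case: ifP => hvu hk.
  rewrite reachS; apply/orP; right; apply/hasP; exists (par u).
    apply: nbrs_par; lia.
  apply: IH => //; have := par_lt (m:=u); lia.
have hv2 : (2 <= v)%N by lia.
apply: (@reach_snoc _ _ _ (par v)); last exact: nbrs_child.
apply: IH => //; have := par_lt hv2; lia.
Qed.

Lemma td_reach n k u v : (1 <= u)%N -> (1 <= v)%N ->
  reach (Edg n) k u v -> (td u v <= k)%N.
Proof.
elim: k u => [|k IH] u hu hv.
  by move=> /= /eqP ->; rewrite td_refl.
rewrite reachS => /orP[/eqP ->|/hasP[w hw hr]]; first by rewrite td_refl.
case: (nbrs_inv hw) => hw1 _ [[hw2 hpw]|[hu2 hpu]].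
  have := IH w hw1 hv hr; subst u.
  case: (td_par hw2 hv); lia.
have := IH w hw1 hv hr; subst w.
case: (td_par hu2 hv); lia.
Qed.

Lemma td_bound u v : (1 <= u)%N -> (1 <= v)%N -> (td u v <= u %/ 2 + v %/ 2)%N.
Proof.
move=> hu hv; move: {-1}(u + v)%N (leqnn (u + v)) => s.
elim: s u v hu hv => [|s IH] u v hu hv hs; first lia.
rewrite td_eq //; case: eqP => // huv.
have hpar : forall x, (2 <= x)%N -> (par x %/ 2 + 1 <= x %/ 2)%N /\ (par x < x)%N.
  move=> x hx; split; last exact: par_lt.
  have := @leq_div2l (x - 3) 2 d isT hd.
  rewrite /par; lia.
case: ifP => hvu.
  have [h1 h2] := hpar u ltac:(lia).
  have := IH (par u) v (par_ge1 _) hv ltac:(lia); lia.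
have [h1 h2] := hpar v ltac:(lia).
have := IH u (par v) hu (par_ge1 _) ltac:(lia); lia.
Qed.

Lemma dist_td n u v : (1 <= u)%N -> (u < v)%N -> (v <= n)%N ->
  dist (Edg n) n u v = td u v.
Proof.
move=> hu huv hvn; rewrite /dist.
apply: find_iota_eq.
- have := td_bound hu (v:=v) ltac:(lia); lia.
- apply: reach_td => //; lia.
- move=> i hi; apply/negP => /td_reach; rewrite add0n; move/(_ hu ltac:(lia)); lia.
Qed.

Definition Rv (v : nat) : {poly int} := (\sum_(1 <= u < v) 'X^(td u v))%R.

Lemma W_eq n : (1 <= n)%N -> W_dendrimer n d = (\sum_(1 <= v < n.+1) Rv v)%R.
Proof.
move=> hn; rewrite /W_dendrimer /wiener_poly edges_eq //.
apply: eq_big_nat => v hv; apply: eq_big_nat => u hu.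
by rewrite dist_td //; lia.
Qed.

Local Open Scope ring_scope.

Lemma sum_if_eq (x : {poly int}) a b p :
  \sum_(a <= u < b) (if u == p then x else 0) = if (a <= p < b)%N then x else 0.
Proof.
elim: b => [|b IH]; first by rewrite big_geq //; case: ifP => // /andP[]; lia.
case: (leqP a b) => hab.
  rewrite big_nat_recr //= IH.
  case: (p =P b) => [->|hpb].
    have -> : (a <= b < b)%N = false by lia.
    have -> : (a <= b < b.+1)%N = true by lia.
    by rewrite add0r eqxx.
  have -> : (b == p) = false by apply/eqP => h; apply: hpb.
  rewrite addr0; congr (if _ then _ else _); apply/idP/idP; lia.
rewrite big_geq //.
by case: ifP => // /andP[]; lia.
Qed.

Lemma Rv_par v : (2 <= v)%N -> Rv v = 'X * \sum_(1 <= u < v) 'X^(td u (par v)).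
Proof.
move=> hv; rewrite /Rv big_distrr /=; apply: eq_big_nat => u hu.
by rewrite td_lt ?exprS //; lia.
Qed.

Lemma Rv_sib v : (3 <= v)%N -> par v.-1 = par v -> Rv v = Rv v.-1 + 'X^2.
Proof.
case: v => [//|w] hv /= hp.
have h2 : (2 <= w)%N by lia.
have h1 : (1 <= w)%N by lia.
rewrite (Rv_par (v:=w.+1)) // (Rv_par h2) (big_nat_recr _ _ _ h1) /=.
rewrite -hp mulrDr.
rewrite (td_gt (par_ge1 _) (par_lt h2)) td_refl //.
Qed.

Lemma decomp u p : (2 <= u)%N -> (1 <= p)%N ->
  'X^(td u p) = 'X * 'X^(td (par u) p) +
    (if (td u p < td (par u) p)%N then 'X^(td u p) - 'X^((td u p).+2) else 0) :> {poly int}.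
Proof.
move=> hu hp; case: (td_par hu hp) => ->.
  by rewrite ifF ?addr0 ?exprS //; lia.
by rewrite ifT ?ltnSn // !exprS; ring.
Qed.

Definition Qd p B : {poly int} :=
  \sum_(2 <= u < B) (if (td u p < td (par u) p)%N then 'X^(td u p) - 'X^((td u p).+2) else 0).

Lemma Qd_1 B : Qd 1 B = 0.
Proof.
rewrite /Qd big_nat_cond big1 // => u /andP[/andP[hu _] _].
rewrite td_gt //; try lia. rewrite ifF //; lia.
Qed.

Lemma Qd_rec p B : (2 <= p)%N -> (p < B)%N -> Qd p B = 1 - 'X^2 + 'X * Qd (par p) B.
Proof.
move=> hp hpB; rewrite /Qd big_distrr /=.
have hpp := par_lt hp.
have -> : 1 - 'X^2 = \sum_(2 <= u < B) (if u == p then 1 - 'X^2 else 0) :> {poly int}.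
  by rewrite sum_if_eq ifT //; lia.
rewrite -big_split /=; apply: eq_big_nat => u hu.
case: (ltngtP u p) => hup.
- rewrite (@td_lt u p) //; try lia.
  have hpu := par_lt (m:=u) ltac:(lia).
  rewrite (@td_lt (par u) p) //; try lia.
  rewrite add0r ltnS; case: ifP; last by rewrite mulr0.
  by move=> _; rewrite !exprS; ring.
- rewrite td_gt //; try lia. rewrite ltnNge leqnSn.
  rewrite (@td_gt u (par p)) //; try lia. rewrite ltnNge leqnSn.
  by rewrite mulr0 addr0.
- subst u; rewrite td_refl //; try lia.
  rewrite (td_lt (par_ge1 _) hpp) td_refl //.
  rewrite (@td_gt p (par p)) // td_refl //.
  by rewrite /= mulr0 addr0 expr0.
Qed.

Lemma anc_id p B : (1 <= p)%N -> (p < B)%N ->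
  'X^(td 1 p) + 'X^((td 1 p).+1) + Qd p B = 1 + 'X.
Proof.
elim/ltn_ind: p => p IH hp hpB.
case: (p =P 1%N) => [->|hp1].
  by rewrite td_refl // Qd_1 expr0 expr1 addr0.
have hp2 : (2 <= p)%N by lia.
have hpp := par_lt hp2.
rewrite Qd_rec // (td_lt (u:=1)) //; try lia.
have := IH (par p) hpp (par_ge1 _) ltac:(lia).
move: (td 1 (par p)) (Qd (par p) B) => h Q H.
transitivity ('X * ('X^h + 'X^(h.+1) + Q) + (1 - 'X^2)); last first.
  by rewrite H; ring.
by rewrite !exprS; ring.
Qed.

Lemma reindex_par (F : nat -> {poly int}) p :
  \sum_(2 <= u < d * p + 3) F (par u) = F 1%N + d%:R * \sum_(1 <= w < p.+1) F w.
Proof.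
elim: p => [|p IH].
  rewrite muln0 add0n big_nat1 big_geq // mulr0 addr0.
  by rewrite /par /= div0n.
have hdp : (d * p <= d * p.+1)%N by rewrite leq_mul2l; lia.
rewrite (@big_cat_nat _ _ _ (d * p + 3)) /=; try lia.
rewrite IH // (@big_nat_recr _ _ _ p.+1) //= mulrDr addrA; congr (_ + _).
have hdS : (d * p.+1 = d * p + d)%N by rewrite mulnS addnC.
rewrite (@eq_big_nat _ _ _ _ _ _ (fun _ => F p.+1)); last first.
  move=> u hu; congr F; rewrite /par.
  have -> : (u - 3 = p * d + (u - 3 - d * p))%N by rewrite mulnC; lia.
  rewrite divnMDl; try lia.
  rewrite divn_small; lia.
rewrite sumr_const_nat mulr_natl.
congr (_ *+ _); lia.
Qed.

Lemma par_fc q : par (d * q + 3) = q.+1.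
Proof. by rewrite /par addnK mulKn //; lia. Qed.

Lemma Rv_fc q : (1 <= q)%N -> Rv (d * q + 3) = 'X + 'X^2 + d%:R * 'X^2 * Rv q.+1.
Proof.
move=> hq.
have hdq : (2 * q <= d * q)%N by rewrite leq_mul2r; lia.
rewrite Rv_par; try lia.
rewrite par_fc big_ltn; try lia.
rewrite (@eq_big_nat _ _ _ _ _ _ (fun u => 'X * 'X^(td (par u) q.+1) +
    (if (td u q.+1 < td (par u) q.+1)%N then 'X^(td u q.+1) - 'X^((td u q.+1).+2) else 0))); last first.
  move=> u hu; apply: decomp; lia.
rewrite big_split /= -big_distrr /= (reindex_par (fun w => 'X^(td w q.+1))).
rewrite -/(Qd q.+1 _) -/(Rv q.+1).
have hB : (q.+1 < d * q + 3)%N by lia.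
have := anc_id (p:=q.+1) (B:=d * q + 3) isT hB.
move: (td 1 q.+1) (Qd q.+1 _) (Rv q.+1) => h Q R H.
have -> : Q = 1 + 'X - 'X^h - 'X^(h.+1) by rewrite -H; ring.
by rewrite !exprS expr0; ring.
Qed.

End Tree.

Section Arith.
Variable d : nat.
Hypothesis hd : (2 <= d)%N.

Fixpoint T (k : nat) : nat := if k is k'.+1 then (d * T k' + 1)%N else 0%N.

Lemma T_eq k : ((d - 1) * T k = d ^ k - 1)%N.
Proof.
elim: k => [|k IH] //=; first by rewrite muln0 expn0.
have h1 : (1 <= d ^ k)%N by rewrite expn_gt0; lia.
rewrite expnS mulnDr muln1 mulnCA IH.
move: (d ^ k) h1 => x hx; nia.
Qed.

Lemma S_T k : ((d ^ k - 1) %/ (d - 1) = T k)%N.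
Proof. by rewrite -T_eq mulKn //; lia. Qed.

Lemma nkT k : nk d k = (2 + (d + 1) * T k)%N.
Proof. by rewrite /nk S_T. Qed.

Lemma mkT k : mk d k = (3 + 2 * d * T k)%N.
Proof. by rewrite /mk S_T. Qed.

Lemma mk_nk k : mk d k = (nk d k + d ^ k)%N.
Proof.
rewrite mkT nkT; have := T_eq k.
have h1 : (1 <= d ^ k)%N by rewrite expn_gt0; lia.
move: (d ^ k) h1 (T k) => x hx t; nia.
Qed.

Lemma nk_mk k : nk d k.+1 = (mk d k + d ^ k.+1)%N.
Proof.
rewrite mkT nkT /= expnS; have := T_eq k.
have h1 : (1 <= d ^ k)%N by rewrite expn_gt0; lia.
move: (d ^ k) h1 (T k) => x hx t; nia.
Qed.

Lemma nk_S k : nk d k.+1 = (d * (nk d k).-1 + 3)%N.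
Proof. rewrite !nkT /=; nia. Qed.

Lemma mk_S k : mk d k.+1 = (d * (mk d k).-1 + 3)%N.
Proof. rewrite !mkT /=; nia. Qed.

Lemma nk_ge k : (k + 2 <= nk d k)%N.
Proof.
rewrite nkT; suff : (k <= T k)%N by nia.
elim: k => //= k IH; nia.
Qed.

Lemma mk_ge k : (3 <= mk d k)%N.
Proof. rewrite mkT; lia. Qed.

Lemma pow_gt0 k : (0 < d ^ k)%N.
Proof. by rewrite expn_gt0; lia. Qed.

Lemma nkS_gt k : (nk d k < nk d k.+1)%N.
Proof. rewrite nk_mk mk_nk; have := pow_gt0 k; have := pow_gt0 k.+1; lia. Qed.

Lemma mkS_gt k : (mk d k < mk d k.+1)%N.
Proof. rewrite (mk_nk k.+1) nk_mk; have := pow_gt0 k; have := pow_gt0 k.+1; lia. Qed.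

Lemma nk_mono i j : (i <= j)%N -> (nk d i <= nk d j)%N.
Proof.
move=> h; rewrite -(subnKC h); elim: (j - i)%N => [|x IH]; first by rewrite addn0.
rewrite addnS; have := nkS_gt (i + x); lia.
Qed.

Lemma mk_mono i j : (i <= j)%N -> (mk d i <= mk d j)%N.
Proof.
move=> h; rewrite -(subnKC h); elim: (j - i)%N => [|x IH]; first by rewrite addn0.
rewrite addnS; have := mkS_gt (i + x); lia.
Qed.

Local Open Scope ring_scope.

Definition co i v := if (nk d i <= v)%N then (d ^ i)%N else 0%N.
Definition ce i v := if (mk d i <= v)%N then (d ^ i * (1 + ((v - mk d i) %/ d ^ i) %% d))%N else 0%N.
Definition term i v : {poly int} := (co i v)%:R * 'X^(2 * i + 1) + (ce i v)%:R * 'X^(2 * i + 2).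
Definition Rf N v := \sum_(i < N) term i v.

Lemma nk0 : nk d 0 = 2%N. Proof. by rewrite nkT /= muln0. Qed.
Lemma mk0 : mk d 0 = 3%N. Proof. by rewrite mkT /= muln0. Qed.

Lemma Rf_2 N : (1 <= N)%N -> Rf N 2 = 'X.
Proof.
case: N => // N _; rewrite /Rf big_ord_recl big1 ?addr0.
  by rewrite /term /co /ce nk0 mk0 /= expn0 mul0r addr0 mul1r.
move=> i _; rewrite /term /co /ce.
have hj : (1 <= lift ord0 i)%N by [].
have := nk_ge (lift ord0 i); have := mk_ge (lift ord0 i).
move: (nat_of_ord (lift ord0 i)) hj => j hj h1 h2.
have -> : (nk d j <= 2)%N = false by lia.
have -> : (mk d j <= 2)%N = false by lia.
by rewrite !mul0r addr0.
Qed.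

Lemma term_succ_eq i v : (3 <= v)%N -> (v == 3%N) || ~~ (d %| v - 3)%N ->
  term i.+1 v = term i.+1 v.-1.
Proof.
move=> hv hnf.
have hnot : forall x, (1 <= x)%N -> v != (d * x + 3)%N.
  move=> x hx; apply/eqP => hvx; move: hnf; rewrite hvx.
  have -> : (d * x + 3 == 3)%N = false by apply/eqP; nia.
  by rewrite addnK dvdn_mulr.
rewrite /term /co /ce.
have hn := hnot (nk d i).-1 ltac:(have := nk_ge i; lia).
rewrite -nk_S in hn.
have hm := hnot (mk d i).-1 ltac:(have := mk_ge i; lia).
rewrite -mk_S in hm.
have -> : (nk d i.+1 <= v)%N = (nk d i.+1 <= v.-1)%N by move: hn; lia.
case: (leqP (mk d i.+1) v.-1) => h.
  have -> : (mk d i.+1 <= v)%N = true by lia.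
  congr (_ + _%:R * _); congr (_ * (1 + _ %% d))%N.
  have -> : (v - mk d i.+1 = (v.-1 - mk d i.+1).+1)%N by lia.
  rewrite divnS ?pow_gt0 //.
  case: (boolP (d ^ i.+1 %| (v.-1 - mk d i.+1).+1)%N) => hdv //.
  exfalso; move: hnf.
  have hdv' : (d %| (v.-1 - mk d i.+1).+1)%N by apply: dvdn_trans hdv; rewrite expnS dvdn_mulr.
  have : (v - 3 = (v.-1 - mk d i.+1).+1 + d * (mk d i).-1)%N by rewrite mk_S in h *; lia.
  move=> ->; rewrite (dvdn_addr _ hdv') (dvdn_mulr _ (dvdnn d)) orbF.
  move/eqP => h3; rewrite mk_S in h; have := mk_ge i; nia.
have -> : (mk d i.+1 <= v)%N = false by move: hm; lia.
done.
Qed.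

Lemma term0_sib v : (3 <= v)%N -> (v == 3%N) || ~~ (d %| v - 3)%N ->
  term 0 v = term 0 v.-1 + 'X^2.
Proof.
move=> hv hnf; rewrite /term /co /ce nk0 mk0 !expn0 !mul1n /=.
rewrite ifT; last lia. rewrite ifT; last lia. rewrite ifT; last lia.
rewrite !divn1 -addrA; congr (_ + _).
have E : (1 + (v - 3) %% d = (if (2 < v.-1)%N then (1 + (v.-1 - 3) %% d) else 0) + 1)%N.
  case: (v =P 3%N) hnf => [->|hv3] /= hnf.
    by rewrite mod0n.
  have -> : (2 < v.-1)%N = true by lia.
  have -> : (v - 3 = (v.-1 - 3).+1)%N by lia.
  rewrite modnS ifF; first lia.
  apply/negbTE; have -> : ((v.-1 - 3).+1 = v - 3)%N by lia. exact: hnf.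
by rewrite E natrD mulrDl mul1r.
Qed.

Lemma Rf_sib N v : (1 <= N)%N -> (3 <= v)%N -> (v == 3%N) || ~~ (d %| v - 3)%N ->
  Rf N v = Rf N v.-1 + 'X^2.
Proof.
case: N => // N _ hv hnf; rewrite /Rf !big_ord_recl term0_sib //.
rewrite -!addrA [_ + 'X^2]addrC; congr (_ + (_ + _)).
congr (_ + _); apply: eq_bigr => i _.
have -> : lift ord0 i = i.+1 :> nat by [].
exact: term_succ_eq.
Qed.

Lemma term_fc i q : (1 <= q)%N -> term i.+1 (d * q + 3) = d%:R * 'X^2 * term i q.+1.
Proof.
move=> hq; rewrite /term /co /ce nk_S mk_S.
have hd0 : (0 < d)%N by lia.
have hn1 := nk_ge i; have hm1 := mk_ge i.
have -> : (d * (nk d i).-1 + 3 <= d * q + 3)%N = (nk d i <= q.+1)%N.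
  rewrite leq_add2r leq_mul2l; lia.
have -> : (d * (mk d i).-1 + 3 <= d * q + 3)%N = (mk d i <= q.+1)%N.
  rewrite leq_add2r leq_mul2l; lia.
have -> : (d * q + 3 - (d * (mk d i).-1 + 3) = d * (q.+1 - mk d i))%N.
  rewrite subnDr -mulnBr; congr (_ * _)%N; lia.
rewrite expnS divnMl //.
have -> : (2 * i.+1 + 1 = 2 + (2 * i + 1))%N by lia.
have -> : (2 * i.+1 + 2 = 2 + (2 * i + 2))%N by lia.
rewrite !exprD.
case: ifP => _; case: ifP => _; rewrite ?natrM ?mulnA ?natrM; ring.
Qed.

Lemma Rf_fc N q : (1 <= q)%N -> Rf N.+1 (d * q + 3) = 'X + 'X^2 + d%:R * 'X^2 * Rf N q.+1.
Proof.
move=> hq; rewrite /Rf big_ord_recl big_distrr /=; congr (_ + _).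
  rewrite /term /co /ce nk0 mk0 !expn0 !mul1n divn1 ifT; last lia.
  rewrite ifT; last lia.
  have -> : ((d * q + 3 - 3) %% d = 0)%N.
    by rewrite addnK; apply/eqP; exact: (dvdn_mulr _ (dvdnn d)).
  by rewrite addn0 !mul1r.
apply: eq_bigr => i _.
have -> : bump 0 i = i.+1 by [].
exact: term_fc.
Qed.

Lemma Rv_Rf v N : (2 <= v)%N -> (v <= N)%N -> Rv d v = Rf N v.
Proof.
elim/ltn_ind: v N => v IH N hv hvN.
case: (v =P 2%N) => [->|hv2].
  rewrite Rf_2; last lia.
  rewrite /Rv big_nat1 (td_lt hd) //.
  have -> : par d 2 = 1%N by rewrite /par /= div0n.
  by rewrite (td_refl hd).
have hv3 : (3 <= v)%N by lia.
case: (boolP ((v == 3%N) || ~~ (d %| v - 3)%N)) => hnf.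
  rewrite (Rv_sib hd) //; last first.
    rewrite /par; congr S.
    case: (v =P 3%N) hnf => [->|hv3'] /= hnf; first by rewrite !div0n.
    have -> : (v - 3 = (v.-1 - 3).+1)%N by lia.
    rewrite divnS; last lia.
    have -> : ((v.-1 - 3).+1 = v - 3)%N by lia.
    by rewrite (negbTE hnf).
  rewrite (IH v.-1 ltac:(lia) N ltac:(lia) ltac:(lia)).
  by rewrite (Rf_sib (N:=N) (v:=v) ltac:(lia) hv3 hnf).
move: hnf; rewrite negb_or negbK => /andP[hn3 /dvdnP[x hx]].
have hx1 : (1 <= x)%N.
  case: x hx => // hx; move: hn3; rewrite mul0n in hx; lia.
have -> : v = (d * x + 3)%N by lia.
rewrite (Rv_fc hd) //.
have hN : (x.+2 <= N)%N by nia.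
have -> : N = N.-1.+1 by lia.
rewrite Rf_fc // (IH x.+1 ltac:(nia) N.-1 ltac:(lia) ltac:(lia)).
done.
Qed.

End Arith.

Section Final.
Variable d : nat.
Hypothesis hd : (2 <= d)%N.

Lemma dm q r e : (r < e)%N -> (q * e + r) %/ e = q /\ (q * e + r) %% e = r.
Proof.
move=> hr; have he : (0 < e)%N by lia.
split; first by rewrite divnMDl // divn_small // addn0.
by rewrite modnMDl modn_small.
Qed.

Definition blk e M := (e * e * (M %/ (e * d)) * 'C(d + 1, 2) + e * e * 'C((M %/ e) %% d + 1, 2)
   + e * ((M %/ e) %% d + 1) * (M %% e + 1))%N.

Lemma blk_step e M : (0 < e)%N -> blk e M.+1 = (blk e M + e * (1 + (M.+1 %/ e) %% d))%N.
Proof.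
move=> he; rewrite /blk !divnMA.
have hM := divn_eq M e; have hb := ltn_pmod M he.
move: (M %/ e) (M %% e) hM hb => q1 b hM hb.
have hq := divn_eq q1 d; have ha := ltn_pmod q1 (ltn_trans (isT : 0 < 1)%N hd).
move: (q1 %/ d) (q1 %% d) hq ha => Q a hq ha.
subst M q1.
have hCd : 'C(d + 1, 2) = ('C(d, 2) + d)%N by rewrite addn1 binS bin1.
have [hdQ hmQ] := dm Q ha.
case: (ltnP b.+1 e) => hbe.
  have := dm (Q * d + a) hbe; rewrite -addnS => -[-> ->].
  rewrite hdQ hmQ; nia.
have hbe' : b.+1 = e by lia.
have -> : ((Q * d + a) * e + b).+1 = ((Q * d + a).+1 * e + 0)%N by rewrite -addnS hbe'; nia.
have [-> ->] := dm (Q * d + a).+1 he.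
case: (ltnP a.+1 d) => had.
  have := dm Q had; rewrite -addnS => -[-> ->].
  have hCa : 'C(a.+1 + 1, 2) = ('C(a + 1, 2) + (a + 1))%N by rewrite addn1 binS bin1 addn1.
  rewrite hCa; nia.
have had' : a.+1 = d by lia.
have -> : (Q * d + a).+1 = (Q.+1 * d + 0)%N by rewrite -addnS had'; nia.
have [-> ->] := dm Q.+1 (ltn_trans (isT : 0 < 1)%N hd).
rewrite hCd.
have -> : 'C(0 + 1, 2) = 0%N by [].
have -> : (a + 1 = d)%N by lia.
nia.
Qed.

Lemma block e c M : (0 < e)%N ->
  (\sum_(c <= v < c + M.+1) e * (1 + ((v - c) %/ e) %% d))%N = blk e M.
Proof.
move=> he; elim: M => [|M IH].
  rewrite addn1 big_nat1 subnn /blk !div0n !mod0n add0n (bin_small (isT : 1 < 2)%N); nia.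
rewrite -addSnnS (@big_nat_recr _ _ _ (c + M.+1)) /=; last lia.
by rewrite IH blk_step // addKn.
Qed.

Lemma mod_split x i : (x %% d ^ i.+1 = x %% d ^ i + (x %/ d ^ i %% d) * d ^ i)%N.
Proof.
have he := pow_gt0 hd i.
have hd0 : (0 < d)%N by lia.
rewrite expnSr.
have hx := divn_eq x (d ^ i); have hr := ltn_pmod x he.
have hq := divn_eq (x %/ d ^ i) d; have ha := ltn_pmod (x %/ d ^ i) hd0.
move: (x %/ d ^ i) (x %% d ^ i) hx hr hq ha => q r hx hr hq ha.
move: (q %/ d) (q %% d) hq ha => Q a hq ha.
subst x q.
have -> : ((Q * d + a) * d ^ i + r = Q * (d ^ i * d) + (a * d ^ i + r))%N by ring.
have hlt : (a * d ^ i + r < d ^ i * d)%N.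
  have : (a * d ^ i + d ^ i <= d ^ i * d)%N.
    nia.
  lia.
have [_ ->] := dm Q hlt.
lia.
Qed.

Lemma digits_sum x i : (\sum_(j < i) ((x %/ d ^ j) %% d) * d ^ j = x %% d ^ i)%N.
Proof.
elim: i => [|i IH]; first by rewrite big_ord0 expn0 modn1.
by rewrite big_ord_recr /= IH mod_split.
Qed.

Lemma T_add b a : T d (b + a) = (T d b + d ^ b * T d a)%N.
Proof.
elim: a => [|a IH]; first by rewrite addn0 /= muln0 addn0.
rewrite addnS /= IH.
have := T_eq hd b.
have h1 := pow_gt0 hd b.
move: (d ^ b) (T d b) (T d a) h1 => P t u h1; nia.
Qed.

Lemma nk_gen i r : nk d (i.+1 + r) = (mk d i + d ^ i.+1 * (1 + (d + 1) * T d r))%N.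
Proof.
rewrite (nkT hd) (mkT hd) T_add.
have := T_eq hd i.+1.
have h1 := pow_gt0 hd i.+1.
rewrite [T d i.+1]/=.
move: (d ^ i.+1) (T d i) (T d r) h1 => P t u h1; nia.
Qed.

Lemma label_cong k n i : (nk d k <= n)%N ->
  ((i < k)%N \/ (i = k /\ mk d k <= n)%N) ->
  (label_val d k n %% d ^ i.+1 = (n - mk d i) %% d ^ i.+1)%N.
Proof.
rewrite /label_val => hn [hik|[-> hmk]].
  have [r hk] : exists r, k = (i.+1 + r)%N by exists (k - i.+1)%N; lia.
  subst k.
  have E := nk_gen i r.
  rewrite expnD.
  move: hn; rewrite E => hn.
  rewrite -(modnMDl (1 + (d + 1) * T d r)) -(modnMDl ((d - 1) * d ^ r) (n - mk d i)).
  congr (_ %% _)%N.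
  move: (d ^ i.+1) ((1 + (d + 1) * T d r)%N) (d ^ r) hn => P X R hn.
  have -> : ((d - 1) * (P * R) = (d - 1) * R * P)%N by ring.
  rewrite [(X * P)%N]mulnC; lia.
rewrite -(modnMDl 1 (n - mk d k)); congr (_ %% _)%N.
rewrite (mk_nk hd) in hmk *; rewrite expnS.
have h1 := pow_gt0 hd k.
move: (d ^ k) h1 hmk => P h1 hmk.
have : ((d - 1) * P + P = d * P)%N by nia.
lia.
Qed.

Lemma digit_eq k n i : (nk d k <= n)%N ->
  ((i < k)%N \/ (i = k /\ mk d k <= n)%N) ->
  label_digit d k n i = (((n - mk d i) %/ d ^ i) %% d)%N /\
  lambda_i d k n i = ((n - mk d i) %% d ^ i)%N.
Proof.
move=> hn hi; have hc := label_cong hn hi.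
split.
  by rewrite /label_digit !modn_divl -expnS hc.
rewrite /lambda_i.
have -> : (\sum_(j < i) label_digit d k n j * d ^ j = label_val d k n %% d ^ i)%N.
  exact: digits_sum.
rewrite -(modn_dvdm (label_val d k n) (dvdn_exp2l d (leqnSn i))).
by rewrite hc modn_dvdm // dvdn_exp2l.
Qed.

Lemma sum_from (f : nat -> nat) a b c : (a <= c)%N ->
  (\sum_(a <= v < b) (if (c <= v)%N then f v else 0) = \sum_(c <= v < b) f v)%N.
Proof.
move=> hac; case: (leqP c b) => hcb.
  rewrite (@big_cat_nat _ _ _ c a b _ _ hac hcb) /= big_nat_cond big1 ?add0n.
    by apply: eq_big_nat => v /andP[h _]; rewrite h.
  by move=> v /andP[/andP[_ h] _]; rewrite leqNgt h.
rewrite [RHS]big_geq; last lia.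
rewrite big_nat_cond big1 // => v /andP[/andP[_ h] _].
by rewrite ifF //; lia.
Qed.

Local Open Scope ring_scope.

Lemma trunc_sum (x : nat -> nat) (Y : nat -> {poly int}) (P : nat -> bool) n K :
  (K <= n)%N -> (forall i, (i < n)%N -> P i = (i < K)%N) ->
  \sum_(i < n) ((if P i then x i else 0%N)%:R * Y i) = \sum_(0 <= i < K) ((x i)%:R * Y i).
Proof.
move=> hK hP; rewrite -(big_mkord xpredT (fun i => ((if P i then x i else 0%N)%:R * Y i))).
rewrite (@big_cat_nat _ _ _ K 0 n _ _ (leq0n K) hK) /=.
have -> : \sum_(K <= i < n) ((if P i then x i else 0%N)%:R * Y i) = 0.
  rewrite big_nat_cond big1 // => i /andP[/andP[h1 h2] _].
  by rewrite hP ?ifF ?mul0r //; lia.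
rewrite addr0; apply: eq_big_nat => i /andP[_ hi]; rewrite hP ?hi //; lia.
Qed.

End Final.
Unset Implicit Arguments.
Local Open Scope ring_scope.

Theorem theorem2p2 (d n k : nat) (hd : (2 <= d)%N) (hn : (2 <= n)%N)
  (hk : (nk d k <= n < nk d k.+1)%N) :
  W_dendrimer n d =
    \sum_(0 <= i < k.+1) ((d ^ i * (n - nk d i + 1))%N)%:R *: 'X^(2 * i + 1)
  + \sum_(0 <= i < (if (n < mk d k)%N then k else k.+1))
      ((d ^ (2 * i) * ((n - mk d i) %/ d ^ i.+1) * 'C(d + 1, 2)
        + d ^ (2 * i) * 'C(label_digit d k n i + 1, 2)
        + d ^ i * (label_digit d k n i + 1) * (lambda_i d k n i + 1))%N)%:R
        *: 'X^(2 * i + 2).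
Proof.
have hn1 : (1 <= n)%N by lia.
case/andP: hk => hk1 hk2.
rewrite (W_eq hd hn1) big_ltn //.
have -> : Rv d 1 = 0 by rewrite /Rv big_geq.
rewrite add0r.
rewrite (@eq_big_nat _ _ _ _ _ _ (fun v => Rf d n v)); last by move=> v hv; apply: Rv_Rf; lia.
rewrite /Rf exchange_big /=.
have step : forall i : nat, \sum_(2 <= v < n.+1) term d i v =
   ((if (nk d i <= n)%N then d ^ i * (n - nk d i + 1) else 0)%N)%:R * 'X^(2 * i + 1)
 + ((if (mk d i <= n)%N then blk d (d ^ i) (n - mk d i) else 0)%N)%:R * 'X^(2 * i + 2).
  move=> i; rewrite /term big_split /= -!big_distrl /= -!natr_sum.
  congr (_%:R * _ + _%:R * _).
    rewrite /co (sum_from hd (fun _ => (d ^ i)%N)); last by have := nk_ge hd i; lia.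
    rewrite sum_nat_const_nat; case: ifP => h; nia.
  rewrite /ce (sum_from hd (fun v => d ^ i * (1 + ((v - mk d i) %/ d ^ i) %% d))%N); last first.
    by have := mk_ge hd i; lia.
  case: ifP => h.
    have -> : n.+1 = (mk d i + (n - mk d i).+1)%N by lia.
    exact: (block hd (mk d i) (n - mk d i) (pow_gt0 hd i)).
  by rewrite big_geq //; lia.
rewrite (eq_bigr _ (fun (i : 'I_n) _ => step i)) big_split /=.
have hkn : (k.+1 <= n)%N by have := nk_ge hd k; lia.
congr (_ + _).
  rewrite (@trunc_sum d hd (fun i => d ^ i * (n - nk d i + 1))%N (fun i => 'X^(2 * i + 1))
             (fun i => nk d i <= n)%N n k.+1 hkn).
    by apply: eq_big_nat => i _; rewrite scaler_nat mulr_natl.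
  move=> i hi; apply/idP/idP => h.
    case: (leqP i k) => // hik.
    have := nk_mono hd hik; lia.
  have := nk_mono hd (i:=i) (j:=k) ltac:(lia); lia.
set K' := (if (n < mk d k)%N then k else k.+1).
have hK' : (K' <= n)%N by rewrite /K'; case: ifP; lia.
have hKi : forall i, (i < K')%N -> (i < k)%N \/ (i = k /\ mk d k <= n)%N.
  move=> i; rewrite /K'; case: ifP => h hi; [left => //|]; case: (ltnP i k) => hik; [by left|right; lia].
rewrite (@trunc_sum d hd (fun i => blk d (d ^ i) (n - mk d i)) (fun i => 'X^(2 * i + 2))
             (fun i => mk d i <= n)%N n K' hK').
  apply: eq_big_nat => i /andP[_ hi]; rewrite scaler_nat mulr_natl.
  congr (_ *+ _).
  have [-> ->] := digit_eq hd hk1 (hKi i hi).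
  rewrite /blk -expnSr.
  have -> : (d ^ (2 * i) = d ^ i * d ^ i)%N by rewrite mul2n -addnn expnD.
  done.
move=> i hi; apply/idP/idP => h.
  rewrite /K'; case: ifP => hnm.
    case: (ltnP i k) => // hik.
    have := mk_mono hd hik; lia.
  case: (ltnP i k.+1) => // hik.
  have := mk_mono hd hik; have := mk_nk hd k.+1; lia.
case: (hKi i h) => [hik|[-> //]].
have := mk_mono hd (i:=i) (j:=k.-1) ltac:(lia).
have := nk_mk hd k.-1; have := nk_mono hd (i:=k.-1.+1) (j:=k) ltac:(lia).
lia.
Qed.
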